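(* In any medium with $n$ states, the number $m$ of effective transitions, i.e. the number of pairs $(S,t)$ with $S$ a state, $t$ a token and $St\neq S$, satisfies $m\le n\log_2 n$.
   Context: A medium consists of a finite set of states and a set of tokens, each token $t$ acting as a function on states, written $S\mapsto St$. Tokens concatenate into messages (words); $Sw$ denotes the state obtained by applying the tokens of $w$ successively to $S$. A token $t$ has a reverse $\tilde t$ if for any two distinct states $S\neq Q$, $St=Q$ iff $Q\tilde t=S$. A message is inconsistent if it contains some token together with its reverse, and consistent otherwise. A message $w$ is vacuous if for each token $t$ it contains equally many copies of $t$ and $\tilde t$. A token $t$ is effective for $S$ if $St\neq S$; a message is stepwise effective for $S$ if each successive token is effective for the state it is applied to. The axioms of a medium are: (1) each token has a unique reverse; (2) for any two distinct states $S,Q$ there is a consistent message $w$ with $Sw=Q$; (3) if $w$ is stepwise effective for $S$, then $Sw=S$ iff $w$ is vacuous; (4) if $Sw=Qz$, $w$ is stepwise effective for $S$, $z$ is stepwise effective for $Q$, and both $w,z$ are consistent, then the concatenation $wz$ is consistent. *)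

(* Defs.v *)
From mathcomp Require Import all_boot.
From Stdlib Require Import Reals.
Set Implicit Arguments. Unset Strict Implicit. Unset Printing Implicit Defensive.

Section Medium.
Variables (S T : finType) (act : S -> T -> S).

Definition apply_msg (s : S) (w : seq T) : S := foldl act s w.

Definition is_reverse (t t' : T) : Prop :=
  forall s q : S, s <> q -> (act s t = q <-> act q t' = s).

Definition inconsistent (w : seq T) : Prop :=
  exists t t', is_reverse t t' /\ t \in w /\ t' \in w.
Definition consistent (w : seq T) : Prop := ~ inconsistent w.

Definition vacuous (w : seq T) : Prop :=
  forall t t', is_reverse t t' -> count_mem t w = count_mem t' w.

Definition effective (s : S) (t : T) : bool := act s t != s.

Fixpoint stepwise_effective (s : S) (w : seq T) : bool :=
  match w with
  | [::] => true
  | t :: w' => effective s t && stepwise_effective (act s t) w'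
  end.

Definition is_medium : Prop :=
  (forall t : T, exists! t' : T, is_reverse t t') /\
  (forall s q : S, s <> q -> exists w, consistent w /\ apply_msg s w = q) /\
  (forall (s : S) (w : seq T), stepwise_effective s w ->
     (apply_msg s w = s <-> vacuous w)) /\
  (forall (s q : S) (w z : seq T), apply_msg s w = apply_msg q z ->
     stepwise_effective s w -> stepwise_effective q z ->
     consistent w -> consistent z -> consistent (w ++ z)).

Definition num_effective : nat := #|[pred p : S * T | effective p.1 p.2]|.

End Medium.

(* Main.v *)
Require Import Defs.
From mathcomp Require Import all_boot.
From mathcomp Require Import zify.
From Stdlib Require Import Reals ClassicalEpsilon Lia Lra.
From Coquelicot Require Import Coquelicot.
Set Implicit Arguments. Unset Strict Implicit. Unset Printing Implicit Defensive.

Local Open Scope R_scope.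


Lemma key_ineq (a b : R) : (1 <= a -> a <= b ->
  a * ln a + b * ln b + 2 * a * ln 2 <= (a + b) * ln (a + b))%R.
Proof.
intros Ha Hab.
pose (f := fun x => (a + x) * ln (a + x) - x * ln x).
assert (Hfa : f a = a * ln a + 2 * a * ln 2).
{ unfold f. replace (a + a) with (2 * a) by ring.
  rewrite ln_mult; lra. }
assert (Hfb : f a <= f b).
{ destruct (Req_dec a b) as [E|NE]; [subst; lra|].
  destruct (MVT_cor2 f (fun x => ln (a + x) - ln x) a b) as [c [Hc1 Hc2]]; [lra| |].
  - intros c Hc. apply is_derive_Reals. unfold f. auto_derive.
    + repeat split; lra.
    + field. lra.
  - assert (ln c < ln (a + c)) by (apply ln_increasing; lra).
    assert (0 <= (ln (a + c) - ln c) * (b - a)) by (apply Rmult_le_pos; lra).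
    lra. }
rewrite Hfa in Hfb. unfold f in Hfb. lra.
Qed.

Local Close Scope R_scope.

Section M.
Variables (S T : finType) (act : S -> T -> S).
Hypothesis Hm : is_medium act.

Local Notation app := (apply_msg act).
Local Notation se := (stepwise_effective act).
Local Notation cons := (consistent act).
Local Notation isr := (is_reverse act).

Lemma rev_ex t : exists t', isr t t'.
Proof. have [H1 _] := Hm. by have [t' [Ht' _]] := H1 t; exists t'. Qed.

Definition rv t := proj1_sig (constructive_indefinite_description _ (rev_ex t)).

Lemma rvP t : isr t (rv t).
Proof. rewrite /rv; by case: constructive_indefinite_description. Qed.

Lemma rev_sym t t' : isr t t' -> isr t' t.
Proof. move=> H s q nsq; split=> E; apply/(H q s) => //; by move=> E'; apply: nsq. Qed.

Lemma rv_eq t t' : isr t t' -> t' = rv t.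
Proof.
have [H1 _] := Hm. case: (H1 t) => x [_ U] H.
by rewrite -(U _ H) -(U _ (rvP t)).
Qed.

Lemma rvK t : rv (rv t) = t.
Proof. by rewrite -(rv_eq (rev_sym (rvP t))). Qed.

Lemma rv_inj : injective rv.
Proof. exact: can_inj rvK. Qed.

Lemma eff_rev s t : act s t != s -> act (act s t) (rv t) = s.
Proof.
move=> ne; have := @rvP t s (act s t).
move=> H; apply/H => // E; by rewrite -E eqxx in ne.
Qed.

Lemma consP w : cons w <-> (forall a, a \in w -> rv a \notin w).
Proof.
split.
- move=> C a aw; apply/negP => ra; apply: C; exists a, (rv a); split=> //; exact: rvP.
- move=> H [a [a' [R [aw a'w]]]]. move: (H a aw). by rewrite -(rv_eq R) a'w.
Qed.

Lemma se_cat s w1 w2 : se s (w1 ++ w2) = se s w1 && se (app s w1) w2.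
Proof.
elim: w1 s => [|t w1 IH] s //=. by rewrite IH andbA.
Qed.

Lemma app_cat s w1 w2 : app s (w1 ++ w2) = app (app s w1) w2.
Proof. by rewrite /apply_msg foldl_cat. Qed.

Definition revm (w : seq T) := map rv (rev w).

Lemma revm_cons t w : revm (t :: w) = revm w ++ [:: rv t].
Proof. by rewrite /revm rev_cons map_rcons cats1. Qed.

Lemma se_rev s w : se s w -> se (app s w) (revm w) /\ app (app s w) (revm w) = s.
Proof.
elim: w s => [|t w IH] s //=.
move=> /andP [e sw]. have [IH1 IH2] := IH _ sw.
rewrite revm_cons se_cat app_cat IH1 IH2 /=.
rewrite /effective eff_rev //. split=> //. rewrite andbT. by rewrite eq_sym.
Qed.

Lemma count_revm a w : count_mem a (revm w) = count_mem (rv a) w.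
Proof.
rewrite /revm count_map count_rev. apply: eq_count => x /=.
apply/eqP/eqP => [<-|->]; by rewrite ?rvK.
Qed.

Fixpoint red s (w : seq T) : seq T :=
  match w with
  | [::] => [::]
  | t :: w' => if act s t != s then t :: red (act s t) w' else red s w'
  end.

Lemma redP s w : [/\ app s (red s w) = app s w, se s (red s w) & {subset red s w <= w}].
Proof.
elim: w s => [|t w IH] s /=; first by split.
case: ifP => ne.
- have [A B C] := IH (act s t). split=> //=; first by rewrite /effective ne.
  move=> x; rewrite !inE => /orP [->//|/C ->]; by rewrite orbT.
- have [A B C] := IH s. split=> //.
  + by rewrite /apply_msg /= (eqP (negbFE ne)).
  + move=> x /C; rewrite inE => ->; by rewrite orbT.
Qed.

Lemma concise_ex s q : exists w, [/\ se s w, cons w & app s w = q].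
Proof.
case: (eqVneq s q) => [<-|nsq].
  by exists [::]; split=> //; move=> [a [a' [_ [H _]]]].
have [_ [H2 _]] := Hm. have nsq' : s <> q by apply/eqP.
have [w [C A]] := H2 s q nsq'.
have [R1 R2 R3] := redP s w. exists (red s w); split=> //; last by rewrite R1.
move=> [a [a' [R [aw a'w]]]]; apply: C; exists a, a'; split=> //; split; exact: R3.
Qed.

Lemma vac s w : se s w -> app s w = s -> vacuous act w.
Proof. have [_ [_ [H3 _]]] := Hm. by move=> sw E; apply/(H3 s w sw). Qed.

Lemma no_self_rev s t : act s t != s -> rv t != t.
Proof.
move=> ne; apply/negP => /eqP rt.
have [m [sm cm am]] := concise_ex s (act s t).
have ets : act (act s t) t = s by rewrite -{2}rt eff_rev.
have V : vacuous act (t :: m).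
  apply: (vac (s := act s t)) => /=.
  + rewrite /effective ets eq_sym ne /=; exact: sm.
  + by rewrite /apply_msg /= ets.
case: m sm cm am V => [|a m] sm cm am V.
  by move: ne; rewrite -am eqxx.
have /consP Cm := cm.
have ram := Cm a (mem_head _ _).
have tm : t \notin a :: m.
  apply/negP => tm; have := Cm t tm; by rewrite rt tm.
have at' : a != t by apply/negP => /eqP E; rewrite E mem_head in tm.
have := V a (rv a) (rvP a).
have C1 : count_mem (rv a) (a :: m) = 0 by apply/count_memPn.
have C2 : 0 < count_mem a (t :: a :: m) by rewrite -has_count has_pred1 inE mem_head orbT.
have -> : count_mem (rv a) (t :: a :: m) = (t == rv a) + count_mem (rv a) (a :: m) by [].
rewrite C1.
have -> : (t == rv a) = false.
  apply/negP => /eqP E. move: at'. by rewrite -rt E rvK eqxx.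
move=> E; by rewrite E in C2.
Qed.


Definition side x t : Prop :=
  exists p w, [/\ se p w, cons w, t \in w & app p w = x].

Lemma cons_single u (s : S) : act s u != s -> cons [:: u].
Proof.
move=> ne; apply/consP => a; rewrite inE => /eqP ->.
rewrite inE; exact: no_self_rev ne.
Qed.

Lemma sideA1 s t : act s t != s -> side (act s t) t.
Proof.
move=> ne; exists s, [:: t]; split=> //; last by rewrite mem_head.
- by rewrite /= /effective ne.
- exact: cons_single ne.
Qed.

Lemma sideA2 s t : act s t != s -> ~ side s t.
Proof.
move=> ne [p [w [sw cw tw aw]]]. have [_ [_ [_ H4]]] := Hm.
have ne' : act (act s t) (rv t) != act s t by rewrite eff_rev // eq_sym.
have E : app p w = app (act s t) [:: rv t] by rewrite aw /apply_msg /= eff_rev.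
have := H4 p (act s t) w [:: rv t] E sw _ cw _.
have H1 : se (act s t) [:: rv t] by rewrite /= /effective ne'.
have H2 : cons [:: rv t] by apply: cons_single ne'.
move=> /(_ H1 H2) /consP C. have := C t; rewrite mem_cat tw /= => /(_ isT).
by rewrite mem_cat inE eqxx orbT.
Qed.

Lemma sideB s u t : act s u != s -> u != t -> side (act s u) t -> side s t.
Proof.
move=> ne ut [p [w [sw cw tw aw]]].
have [m [sm cm am]] := concise_ex p s.
case tm: (t \in m); first by exists p, m.
exfalso.
have [R1 R2] := se_rev sm. rewrite am in R1 R2.
have ne' : act (act s u) (rv u) != act s u by rewrite eff_rev // eq_sym.
have sW : se p (w ++ rv u :: revm m).
  rewrite se_cat sw aw /=. rewrite /effective ne' /=. by rewrite eff_rev.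
have aW : app p (w ++ rv u :: revm m) = p.
  by rewrite app_cat aw /apply_msg /= eff_rev.
have V := vac sW aW (rvP t).
have /consP Cw := cw.
have C1 : count_mem (rv t) w = 0 by apply/count_memPn; exact: Cw.
have C2 : 0 < count_mem t w by rewrite -has_count has_pred1.
move: V. rewrite -cat1s !count_cat C1 !count_revm rvK (count_memPn (negbT tm)).
have C3 : count_mem (rv t) [:: rv u] = 0 by rewrite /= (inj_eq rv_inj) (negbTE ut).
rewrite C3 add0n addn0 => /eqP; rewrite addn_eq0 => /andP [/eqP E _].
by rewrite E in C2.
Qed.


Definition sb x t : bool :=
  if excluded_middle_informative (side x t) then true else false.

Lemma sbP x t : sb x t = true <-> side x t.
Proof. rewrite /sb; case: excluded_middle_informative => //. Qed.

Definition E (X : {set S}) : {set S * T} :=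
  [set p | [&& p.1 \in X, act p.1 p.2 \in X & act p.1 p.2 != p.1]].

Lemma cardU_le (U : finType) (A B : {set U}) : #|A :|: B| <= #|A| + #|B|.
Proof. by rewrite cardsU leq_subr. Qed.

Lemma split_bound (X : {set S}) s t : s \in X -> act s t \in X -> act s t != s ->
  exists X1 X2 : {set S}, [/\ #|X1| + #|X2| = #|X|, 0 < #|X1|, 0 < #|X2| &
    #|E X| <= #|E X1| + #|E X2| + 2 * minn #|X1| #|X2|].
Proof.
move=> sX qX ne.
pose P := [set x | sb x t].
pose X1 := X :&: P. pose X2 := X :\: P.
have qP : act s t \in P by rewrite inE; apply/sbP; exact: sideA1.
have sP : s \notin P by rewrite inE; apply/negP => /sbP; exact: sideA2.
pose C12 := [set p in E X | (p.1 \in X2) && (act p.1 p.2 \in X1)].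
pose C21 := [set p in E X | (p.1 \in X1) && (act p.1 p.2 \in X2)].
have H12 p : p \in C12 -> p.2 = t.
  case: p => x u; rewrite !inE /= => /andP [/and3P [_ _ nx] /andP [/andP [xP _] /andP [_ yP]]].
  case: (eqVneq u t) => // ut; exfalso.
  move/negP: xP; apply; apply/sbP; apply: (sideB nx ut); exact/sbP.
have H21 p : p \in C21 -> p.2 = rv t.
  case: p => x u; rewrite !inE /= => /andP [/and3P [_ _ nx] /andP [/andP [_ xP] /andP [yP _]]].
  have ny : act (act x u) (rv u) != act x u by rewrite eff_rev // eq_sym.
  case: (eqVneq (rv u) t) => [<-|ut]; first by rewrite rvK.
  exfalso. move/negP: yP; apply; apply/sbP.
  apply: (sideB ny ut). rewrite eff_rev //. exact/sbP.
have inj1 (C : {set S * T}) v : (forall p, p \in C -> p.2 = v) ->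
    {in C &, injective (fun p : S * T => p.1)}.
  move=> HC [x u] [x' u'] /HC /= -> /HC /= -> /= ->. done.
have eff12 p : p \in C12 -> act p.1 p.2 != p.1.
  by rewrite !inE => /andP [/and3P [_ _ ->]].
have eff21 p : p \in C21 -> act p.1 p.2 != p.1.
  by rewrite !inE => /andP [/and3P [_ _ ->]].
have inj2 (C : {set S * T}) v : (forall p, p \in C -> p.2 = v) ->
    (forall p, p \in C -> act p.1 p.2 != p.1) ->
    {in C &, injective (fun p : S * T => act p.1 p.2)}.
  move=> HC HE [x u] [x' u'] /[dup] Hp /HC /= Eu /[dup] Hp' /HC /= Eu' /= Exy.
  subst u u'.
  have /= nx := HE _ Hp. have /= nx' := HE _ Hp'. congr (_, _).
  by rewrite -(eff_rev nx) Exy eff_rev.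
have c12a : #|C12| <= #|X2|.
  rewrite -(card_in_imset (inj1 _ _ H12)); apply: subset_leq_card.
  apply/subsetP => x /imsetP [p]; rewrite inE => /andP [_ /andP [? _]] ->; done.
have c12b : #|C12| <= #|X1|.
  rewrite -(card_in_imset (inj2 _ _ H12 eff12)); apply: subset_leq_card.
  apply/subsetP => x /imsetP [p]; rewrite inE => /andP [_ /andP [_ ?]] ->; done.
have c21a : #|C21| <= #|X1|.
  rewrite -(card_in_imset (inj1 _ _ H21)); apply: subset_leq_card.
  apply/subsetP => x /imsetP [p]; rewrite inE => /andP [_ /andP [? _]] ->; done.
have c21b : #|C21| <= #|X2|.
  rewrite -(card_in_imset (inj2 _ _ H21 eff21)); apply: subset_leq_card.
  apply/subsetP => x /imsetP [p]; rewrite inE => /andP [_ /andP [_ ?]] ->; done.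
exists X1, X2; split.
- exact: cardsID.
- by rewrite card_gt0; apply/set0Pn; exists (act s t); rewrite inE qX qP.
- by rewrite card_gt0; apply/set0Pn; exists s; rewrite inE sX sP.
- have sub : E X \subset ((E X1 :|: E X2) :|: C12) :|: C21.
    apply/subsetP => [[x u]] Hp. have Hp' := Hp. move: Hp'.
    rewrite !inE /= => /and3P [xX yX nx].
    case xP : (sb x t); case yP : (sb (act x u) t);
      rewrite ?xX ?yX ?nx ?Hp /= ?inE ?xP ?yP ?xX ?yX ?nx ?Hp ?orbT //.
  have h0 := subset_leq_card sub.
  have h1 := cardU_le (E X1 :|: E X2 :|: C12) C21.
  have h2 := cardU_le (E X1 :|: E X2) C12.
  have h3 := cardU_le (E X1) (E X2).
  have m1 : #|C12| <= minn #|X1| #|X2| by rewrite leq_min c12a c12b.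
  have m2 : #|C21| <= minn #|X1| #|X2| by rewrite leq_min c21a c21b.
  lia.
Qed.


Lemma INR_add a b : INR (a + b) = (INR a + INR b)%R.
Proof. exact: plus_INR. Qed.
Lemma INR_mul a b : INR (a * b) = (INR a * INR b)%R.
Proof. exact: mult_INR. Qed.
Lemma INR_leq a b : a <= b -> (INR a <= INR b)%R.
Proof. by move/leP; apply: le_INR. Qed.

Lemma main_bound n : forall X : {set S}, #|X| = n ->
  (INR #|E X| * ln 2 <= INR n * ln (INR n))%R.
Proof.
elim/ltn_ind: n => n IH X HX.
have l2 : (0 < ln 2)%R by rewrite -ln_1; apply ln_increasing; lra.
case: (set_0Vmem (E X)) => [E0 | [[s t] Hp]].
- rewrite E0 cards0 /= Rmult_0_l. case: n {IH HX} => [|n].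
    rewrite /= Rmult_0_l; exact: Rle_refl.
  apply Rmult_le_pos; first exact: pos_INR.
  rewrite -ln_1; apply ln_le; first lra.
  rewrite S_INR; have := pos_INR n; lra.
- move: Hp; rewrite inE /= => /and3P [sX qX ne].
  have [X1 [X2 [Hc p1 p2 Hb]]] := split_bound sX qX ne.
  have IH1 := IH #|X1| ltac:(lia) X1 erefl.
  have IH2 := IH #|X2| ltac:(lia) X2 erefl.
  have HbR := INR_leq Hb. rewrite (INR_add (_ + _)) (INR_add #|E X1|) INR_mul in HbR.
  have HbR' := Rmult_le_compat_r _ _ _ (Rlt_le _ _ l2) HbR.
  have Hn : INR n = (INR #|X1| + INR #|X2|)%R by rewrite -HX -Hc INR_add.
  rewrite Hn.
  have q1 : (1 <= INR #|X1|)%R by apply: (INR_leq p1).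
  have q2 : (1 <= INR #|X2|)%R by apply: (INR_leq p2).
  case: (leqP #|X1| #|X2|) => hab.
  + rewrite (minn_idPl hab) in HbR'.
    have K := key_ineq q1 (INR_leq hab).
    simpl INR in HbR'.
    have R1 : ((INR #|E X1| + INR #|E X2| + (1 + 1) * INR #|X1|) * ln 2 =
      INR #|E X1| * ln 2 + INR #|E X2| * ln 2 + 2 * INR #|X1| * ln 2)%R by ring.
    rewrite R1 in HbR'. move: HbR' IH1 IH2 K.
    generalize (INR #|E X1| * ln 2)%R (INR #|E X2| * ln 2)%R (2 * INR #|X1| * ln 2)%R
      (INR #|X1| * ln (INR #|X1|))%R (INR #|X2| * ln (INR #|X2|))%R (INR #|E X| * ln 2)%R.
    intros; lra.
  + have hba := ltnW hab.
    rewrite (minn_idPr hba) in HbR'.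
    have K := key_ineq q2 (INR_leq hba).
    simpl INR in HbR'. rewrite (Rplus_comm (INR #|X1|)).
    have R1 : ((INR #|E X1| + INR #|E X2| + (1 + 1) * INR #|X2|) * ln 2 =
      INR #|E X1| * ln 2 + INR #|E X2| * ln 2 + 2 * INR #|X2| * ln 2)%R by ring.
    rewrite R1 in HbR'. move: HbR' IH1 IH2 K.
    generalize (INR #|E X1| * ln 2)%R (INR #|E X2| * ln 2)%R (2 * INR #|X2| * ln 2)%R
      (INR #|X1| * ln (INR #|X1|))%R (INR #|X2| * ln (INR #|X2|))%R (INR #|E X| * ln 2)%R.
    intros; lra.
Qed.

End M.

Theorem mainTheorem1 (S T : finType) (act : S -> T -> S) :
  is_medium act ->
  (INR (num_effective act) <= INR #|S| * (ln (INR #|S|) / ln 2))%R.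
Proof.
move=> Hm.
have l2 : (0 < ln 2)%R by rewrite -ln_1; apply ln_increasing; lra.
have -> : num_effective act = #|E act setT|.
  rewrite /num_effective; apply: eq_card => p; by rewrite !inE /=.
have H := main_bound Hm (cardsT S).
apply: (Rmult_le_reg_r (ln 2) _ _ l2).
rewrite Rmult_assoc /Rdiv Rmult_assoc Rinv_l; last lra.
by rewrite Rmult_1_r.
Qed.
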